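(* Let $\mathcal{G}=(\mathcal{V},\mathcal{E})$ be a DAG with treatment $A$ and outcome $Y$ as in the context, and $\mathcal{G}'=\mathcal{G}\setminus(A\to Y)$. Let $I\subseteq\mathcal{I}$ be a set of irrelevant variables, $Z\subseteq\mathcal{V}\setminus\{A,Y\}$, and $U\subseteq\mathcal{W}$ a set of extended confounding variables such that $Z\cup I\cup U$ is $(Z\cup I)$-irreducible for estimating $\tau$. Then in $\mathcal{G}'$: (i) $A\perp_{\mathcal{G}'}Y\mid Z\cup I\cup U$; (ii) $A\perp_{\mathcal{G}'}Y\mid Z\cup U$; hence $Z\cup I\cup U$ and $Z\cup U$ are valid adjustment sets. In $\mathcal{G}$: (a) $I\perp_{\mathcal{G}}Y\mid A\cup Z\cup U$; (b) $I\perp_{\mathcal{G}}U\mid Z$.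
   Context: $\mathcal{G}=(\mathcal{V},\mathcal{E})$ is a DAG containing treatment $A$ and outcome $Y$ with an edge $A\to Y$; variables follow a linear Gaussian SEM Markov and faithful to $\mathcal{G}$; no variable of $\mathcal{V}\setminus\{A,Y\}$ is a descendant of $A$. $\perp_{\mathcal{H}}$ denotes d-separation in graph $\mathcal{H}$. $\tau=\frac{\partial}{\partial a}E\{Y\mid do(A=a)\}$. A set $Z\subseteq\mathcal{V}\setminus\{A,Y\}$ is a valid adjustment set if the OLS estimator of the $A$-coefficient when regressing $Y$ on $A$ and $Z$ is unbiased for $\tau$ for every distribution Markov to $\mathcal{G}$ (equivalently here, $A\perp_{\mathcal{G}'}Y\mid Z$). For $K\subseteq Z$, a valid set $Z$ is $K$-irreducible if no proper subset $Z'\subsetneq Z$ with $K\subseteq Z'$ is valid. Irrelevant variables $\mathcal{I}$: $V\in\mathcal{V}\setminus\{A,Y\}$ such that in $\mathcal{G}'$, $V$ is d-separated from $Y$ given every $K\subseteq\mathcal{V}\setminus\{A,Y\}$. Extended confounding variables $\mathcal{W}$: $V\in\mathcal{V}\setminus\{A,Y\}$ d-connected in $\mathcal{G}'$ to $A$ given some $K\subseteq\mathcal{V}\setminus\{A,Y\}$ and to $Y$ given some $L\subseteq\mathcal{V}\setminus\{A,Y\}$. *)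

(* Defs.v *)
From mathcomp Require Import all_boot.
Set Implicit Arguments. Unset Strict Implicit. Unset Printing Implicit Defensive.

Section Graphs.
Variable V : finType.

(* A directed graph on V: [e x y] means there is an edge x -> y. *)
Definition acyclic (e : rel V) : Prop := forall x y, e x y -> ~~ connect e y x.

Definition adj (e : rel V) : rel V := fun x y => e x y || e y x.

Definition anc_of (e : rel V) (v : V) (Z : {set V}) : bool :=
  [exists z in Z, connect e v z].

Definition dconnected (e : rel V) (Z : {set V}) (x y : V) : Prop :=
  exists p : seq V,
    [/\ uniq (x :: p), path (adj e) x p, last x p = y &
      forall i, 0 < i -> i.+1 < size (x :: p) ->
        let a := nth x (x :: p) i.-1 in
        let b := nth x (x :: p) i in
        let c := nth x (x :: p) i.+1 in
        if e a b && e c b then anc_of e b Z else b \notin Z].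

Definition dsep (e : rel V) (X Y Z : {set V}) : Prop :=
  forall x y, x \in X -> y \in Y -> ~ dconnected e Z x y.

Definition remove_edge (e : rel V) (A Y : V) : rel V :=
  fun x y => e x y && ~~ ((x == A) && (y == Y)).

(* Valid adjustment set (graphical characterisation, cf. context:
   Z subset of V \ {A,Y} and A _||_ Y | Z in G'). *)
Definition valid_adj (e : rel V) (A Y : V) (Z : {set V}) : Prop :=
  Z \subset ~: [set A; Y] /\ dsep (remove_edge e A Y) [set A] [set Y] Z.

Definition irreducible (e : rel V) (A Y : V) (K Z : {set V}) : Prop :=
  K \subset Z /\ valid_adj e A Y Z /\
  forall Z' : {set V}, Z' \proper Z -> K \subset Z' -> ~ valid_adj e A Y Z'.

Definition irrelevant (e : rel V) (A Y : V) (v : V) : Prop :=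
  v \notin [set A; Y] /\
  forall K : {set V}, K \subset ~: [set A; Y] ->
    dsep (remove_edge e A Y) [set v] [set Y] K.

Definition ext_confounding (e : rel V) (A Y : V) (v : V) : Prop :=
  v \notin [set A; Y] /\
  (exists K : {set V}, K \subset ~: [set A; Y] /\
     dconnected (remove_edge e A Y) K v A) /\
  (exists L : {set V}, L \subset ~: [set A; Y] /\
     dconnected (remove_edge e A Y) L v Y).

End Graphs.

(* Main.v *)
Require Import Defs.
From mathcomp Require Import all_boot.
From Stdlib Require Import Classical.
Set Implicit Arguments. Unset Strict Implicit. Unset Printing Implicit Defensive.

Fixpoint act (V : Type) (ok : V -> V -> V -> bool) (s : seq V) : bool :=
  match s with
  | a :: ((b :: c :: _) as t) => ok a b c && act ok t
  | _ => true
  end.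

Lemma act_nth (V : Type) (ok : V -> V -> V -> bool) (x0 : V) (s : seq V) :
  act ok s <-> (forall i, 0 < i -> i.+1 < size s ->
     ok (nth x0 s i.-1) (nth x0 s i) (nth x0 s i.+1)).
Proof.
elim: s => [|a t IH]; first by split => // _ [|i].
case: t IH => [|b [|c r]] IH.
- by split => // _ [|[|i]].
- by split => // _ [|[|i]].
- change (act ok [:: a, b, c & r]) with (ok a b c && act ok [:: b, c & r]).
  split.
  + move=> /andP [h1 /IH h2] [|[|i]] // _ /= hi.
    exact: (h2 i.+1).
  + move=> h; apply/andP; split; first exact: (h 1).
    apply/IH; move=> [|i] // _ hi; exact: (h i.+2).
Qed.

Lemma act_bad (V : Type) (ok : V -> V -> V -> bool) (x0 : V) (s : seq V) :
  ~~ act ok s -> exists i, [/\ 0 < i, i.+1 < size s &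
     ~~ ok (nth x0 s i.-1) (nth x0 s i) (nth x0 s i.+1)].
Proof.
move=> h; apply: not_all_not_ex => hn; move/negP: h; apply.
apply/(act_nth _ x0) => i h1 h2; apply/negPn/negP => h3.
by apply: (hn i); split.
Qed.

Lemma path_drop (T : Type) (e : rel T) (x0 : T) (s : seq T) n :
  path e (head x0 s) (behead s) -> n < size s ->
  path e (nth x0 s n) (drop n.+1 s).
Proof.
elim: s n => [|a t IH] [|n] //= hp hn; first by rewrite drop0.
case: t IH hp hn => [|b t] IH //= /andP [_ hp] hn.
exact: (IH n hp hn).
Qed.

Lemma last_drop (T : Type) (x0 : T) (s : seq T) n :
  n < size s -> last (nth x0 s n) (drop n.+1 s) = last x0 s.
Proof.
elim: s n => [|a t IH] [|n] //= hn; first by rewrite drop0.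
case: t IH hn => [|b t] IH //= hn.
by rewrite (IH n hn).
Qed.

Lemma mem_drop_nth (T : eqType) (x0 : T) (s : seq T) n v :
  v \in drop n s -> exists2 m, n <= m < size s & v = nth x0 s m.
Proof.
move=> hv; exists (n + index v (drop n s)).
  rewrite leq_addr /=; move: hv; rewrite -index_mem size_drop.
  by rewrite ltn_subRL.
by rewrite -nth_drop nth_index.
Qed.

Lemma path_conn (T : finType) (g : rel T) x d v :
  path g x d -> v \in x :: d -> connect g x v && connect g v (last x d).
Proof.
elim: d x v => [|y d IH] x v /=.
  by move=> _; rewrite inE => /eqP ->; rewrite connect0.
move=> /andP [hxy hp]; rewrite inE => /orP [/eqP ->|hv].
  rewrite connect0 /=; apply: connect_trans (connect1 hxy) _.
  by case/andP: (IH y y hp (mem_head _ _)).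
by case/andP: (IH y v hp hv) => h1 h2; rewrite h2 (connect_trans (connect1 hxy) h1).
Qed.

Definition rA (T : finType) (g : rel T) (A : T) : rel T :=
  fun x y => [&& adj g x y, x != A & y != A].

Lemma L_conn (T : finType) (g : rel T) (A : T) x p :
  path (adj g) x p -> x != A -> A \notin p -> connect (rA g A) x (last x p).
Proof.
elim: p x => [|y p IH] x /=; first by rewrite connect0.
move=> /andP [hxy hp] hx; rewrite inE negb_or => /andP [hy hA].
apply: connect_trans (connect1 _) (IH y hp _ hA); last by rewrite eq_sym.
by rewrite /rA hxy hx eq_sym hy.
Qed.

Lemma rev_cons_last (T : Type) (x : T) d :
  rev (x :: d) = last x d :: rev (belast x d).
Proof. by rewrite lastI rev_rcons. Qed.

Lemma last_rev_belast (T : Type) (x : T) d :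
  last (last x d) (rev (belast x d)) = x.
Proof.
have h := rev_cons_last x d; rewrite rev_cons in h.
transitivity (last x (last x d :: rev (belast x d))); first by [].
by rewrite -h last_rcons.
Qed.

Lemma mem_interior (T : eqType) (x : T) p v :
  uniq (x :: p) -> v \in x :: p -> v != x -> v != last x p ->
  exists j, [/\ 0 < j, j.+1 < size (x :: p) & nth x (x :: p) j = v].
Proof.
move=> hu hv hvx hvl; exists (index v (x :: p)).
have hi := hv; rewrite -index_mem in hi.
split; last by rewrite nth_index.
- case E: (index v (x :: p)) => //.
  by move: (nth_index x hv); rewrite E /= => hh; rewrite hh eqxx in hvx.
- rewrite ltn_neqAle hi andbT; apply/negP => /eqP E.
  move: (nth_index x hv); case: E => E.
  have {}E : index v (x :: p) = size p := E.
  have : nth x (x :: p) (size p) = last x p by rewrite (nth_last x (x :: p)).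
  by rewrite E => -> hh; rewrite hh eqxx in hvl.
Qed.

Definition okv (T : finType) (g : rel T) (K : {set T}) (a b c : T) : bool :=
  if g a b && g c b then anc_of g b K else b \notin K.

Lemma act_dir (T : finType) (g : rel T) (K : {set T}) d x (t : seq T) :
  (forall u v, g u v -> ~~ g v u) -> path g x d ->
  (forall v, v \in x :: d -> v \notin K) ->
  act (okv g K) (x :: t) -> act (okv g K) (rev (x :: d) ++ t).
Proof.
move=> hns; elim: d x t => [|y d IH] x t //= /andP [hxy hp] hK ht.
rewrite rev_cons cat_rcons; apply: IH => //.
  by move=> v hv; apply: hK; rewrite inE hv orbT.
case: t ht => [|z t] // ht.
have ht' : act (okv g K) [:: x, z & t] := ht.
change (okv g K y x z && act (okv g K) [:: x, z & t]); rewrite ht' andbT.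
rewrite /okv (negbTE (hns _ _ hxy)) /=; apply: hK; exact: mem_head.
Qed.

Lemma anc_trans (T : finType) (g : rel T) (K : {set T}) x v :
  connect g x v -> anc_of g v K -> anc_of g x K.
Proof.
move=> hxv /existsP [z /andP [hz hc]]; apply/existsP; exists z.
by rewrite hz (connect_trans hxv hc).
Qed.

Lemma anc_sub (T : finType) (g : rel T) (K K' : {set T}) x :
  K \subset K' -> anc_of g x K -> anc_of g x K'.
Proof.
move=> hs /existsP [z /andP [hz hc]]; apply/existsP; exists z.
by rewrite hc (subsetP hs _ hz).
Qed.

Lemma surg (T : finType) (g : rel T) (K : {set T}) (A Y x0 : T) (q : seq T) :
  (forall u v, g u v -> ~~ g v u) ->
  (forall v, connect g A v -> v = A) -> A \notin K ->
  (forall v, connect g Y v -> v = Y) -> Y != A ->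
  uniq (A :: q) -> path (adj g) A q -> last A q = Y ->
  (forall j, 0 < j -> j.+1 < size (A :: q) ->
     if g (nth x0 (A :: q) j.-1) (nth x0 (A :: q) j) &&
        g (nth x0 (A :: q) j.+1) (nth x0 (A :: q) j)
     then anc_of g (nth x0 (A :: q) j) K || connect g (nth x0 (A :: q) j) A
     else nth x0 (A :: q) j \notin K) ->
  dconnected g K A Y.
Proof.
move=> hns hA hAK hY hYA hu hp hl hw.
set s := A :: q.
pose P := fun j => [&& j < size s, connect g (nth x0 s j) A &
                    ~~ anc_of g (nth x0 s j) K].
have P0 : P 0.
  rewrite /P /= connect0 /=; apply/negP => /existsP [z /andP [hz hc]].
  by move: hz; rewrite (hA z hc) (negbTE hAK).
have ub : forall j, P j -> j <= size s by move=> j /and3P [h _ _]; exact: ltnW.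
case: (ex_maxnP (ex_intro _ 0 P0) ub) => l Pl maxl.
move/and3P: Pl => [hls hconn hnanc].
set xl := nth x0 s l in hconn hnanc.
have hl1 : l.+1 < size s.
  rewrite ltn_neqAle hls andbT; apply/negP => /eqP E.
  have E' : l = size q by case: E.
  have : xl = Y.
    rewrite /xl E' -hl; exact: (nth_last x0 s).
  move=> hxl; rewrite hxl in hconn; move: (hY A hconn) => hh.
  by rewrite hh eqxx in hYA.
move: hconn => /connectP [d0 hd0 hd0l].
move: hd0l; case: (shortenP hd0) => d hd hdu _ hdl.
set t := drop l.+1 s.
have sT : drop l s = xl :: t by rewrite /t /xl (drop_nth x0).
have reachD : forall v, v \in xl :: d -> connect g xl v && connect g v A.
  by move=> v hv; rewrite hdl; exact: path_conn.
have notK : forall v, v \in xl :: d -> v \notin K.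
  move=> v /reachD /andP [h1 _]; apply/negP => hv; move/negP: hnanc; apply.
  by apply/existsP; exists v; rewrite hv h1.
have maxT : forall m, l < m -> m < size s -> connect g (nth x0 s m) A ->
    anc_of g (nth x0 s m) K.
  move=> m hlm hms hc; case E: (anc_of g (nth x0 s m) K) => //.
  have : P m by rewrite /P hms hc E.
  by move/maxl; rewrite leqNgt hlm.
have disj : forall v, v \in xl :: d -> v \in t -> False.
  move=> v hv /(mem_drop_nth x0) [m /andP [hm1 hm2] hvm]; subst v.
  case/andP: (reachD _ hv) => h1 h2.
  by move/negP: hnanc; apply; apply: anc_trans h1 (maxT m hm1 hm2 h2).
have hN : rev (xl :: d) = A :: rev (belast xl d) by rewrite rev_cons_last -hdl.
have lastr : last A (rev (belast xl d)) = xl.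
  by rewrite {1}hdl last_rev_belast.
exists (rev (belast xl d) ++ t); split.
- rewrite -cat_cons -hN cat_uniq rev_uniq hdu drop_uniq // andbT.
  apply/hasPn => v vt; rewrite mem_rev; apply/negP => vD; exact: disj vD vt.
- rewrite cat_path lastr; apply/andP; split.
    rewrite {1}hdl rev_path; apply: sub_path hd => u v huv.
    by rewrite /adj huv orbT.
  exact: (@path_drop _ _ x0 s l hp hls).
- by rewrite last_cat lastr /t /xl (last_drop x0 hls).
- have hact : act (okv g K) (A :: (rev (belast xl d) ++ t)).
    rewrite -cat_cons -hN; apply: act_dir => //.
    rewrite -sT; apply/(act_nth _ x0) => i hi0 his.
    rewrite size_drop in his.
    rewrite !nth_drop.
    have hj0 : 0 < l + i by rewrite addn_gt0 hi0 orbT.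
    have hjs : (l + i).+1 < size s by rewrite -addnS -ltn_subRL.
    have := hw (l + i) hj0 hjs.
    have -> : (l + i).-1 = l + i.-1 by case: i hi0 {his hj0 hjs}=> // i _; rewrite addnS.
    rewrite addnS /okv -/s; case: ifP => // _ /orP [] // hc.
    apply: maxT => //; last exact: ltnW.
    by rewrite -{1}(addn0 l) ltn_add2l.
  move/(act_nth _ A): hact => H i h1 h2 /=; exact: (H i h1 h2).
Qed.

Lemma nbrs (T : Type) (r : rel T) x p j : path r x p -> 0 < j ->
  j.+1 < size (x :: p) ->
  r (nth x (x :: p) j.-1) (nth x (x :: p) j) &&
  r (nth x (x :: p) j) (nth x (x :: p) j.+1).
Proof.
move=> /(pathP x) H; case: j => // j _ hjs /=.
rewrite /= ltnS in hjs.
apply/andP; split; [apply: H; exact: ltnW | exact: (H j.+1)].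
Qed.

Lemma KL (V : finType) (e : rel V) (A Y i : V) :
  irrelevant e A Y i -> ~ connect (rA (remove_edge e A Y) A) i Y.
Proof.
move=> [hi hK] /connectP [p0 hp0 hl0].
move: hl0; case: (shortenP hp0) => p hp hu _ hl.
set g := remove_edge e A Y in hp *.
set s := i :: p.
pose collat v := let j := index v s in
  [&& 0 < j, j.+1 < size s & g (nth i s j.-1) v && g (nth i s j.+1) v].
pose K := [set v | [&& v != A, v != Y & collat v]].
have hKs : K \subset ~: [set A; Y].
  by apply/subsetP => v; rewrite !inE => /and3P [h1 h2 _]; rewrite negb_or h1 h2.
apply: (hK K hKs i Y (set11 i) (set11 Y)).
have pA : forall x q, path (rA g A) x q -> forall v, v \in q -> v != A.
  move=> x q; elim: q x => [|y q IH] x //= /andP [/and3P [_ _ hy] hq] v.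
  by rewrite inE => /orP [/eqP ->|hv] //; exact: IH hq v hv.
exists p; split => //.
- by apply: sub_path hp => x y /and3P [].
- move=> j hj0 hjs /=.
  have hjs' : j < size s := ltnW hjs.
  have ib : index (nth i s j) s = j := index_uniq i hjs' hu.
  case: ifP => hc.
  + apply/existsP; exists (nth i s j); rewrite connect0 andbT inE.
    apply/and3P; split.
    * case: j hj0 hjs {hjs' ib hc} => // j _ hjs /=.
      apply: (pA i p hp); apply: mem_nth.
      by rewrite /s /= ltnS in hjs; exact: ltnW.
    * apply/eqP => E.
      have : nth i s j = nth i s (size p) by rewrite E hl; symmetry; exact: (nth_last i s).
      move/eqP; rewrite nth_uniq //= => /eqP hj; by rewrite hj ltnn in hjs.
    * rewrite /collat; cbv zeta; rewrite ib hj0 hjs; exact: hc.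
  + rewrite inE /collat; cbv zeta; rewrite ib.
    by move: hc; rewrite /s => ->; rewrite !andbF.
Qed.

Theorem lemmaB6 (V : finType) (e : rel V) (A Y : V) (I Z U : {set V}) :
  acyclic e -> A != Y -> e A Y ->
  (forall v, v != A -> v != Y -> ~ connect e A v) ->
  (forall v, v \in I -> irrelevant e A Y v) ->
  Z \subset ~: [set A; Y] ->
  (forall v, v \in U -> ext_confounding e A Y v) ->
  irreducible e A Y (Z :|: I) (Z :|: I :|: U) ->
  [/\ dsep (remove_edge e A Y) [set A] [set Y] (Z :|: I :|: U),
      dsep (remove_edge e A Y) [set A] [set Y] (Z :|: U),
      valid_adj e A Y (Z :|: I :|: U) /\ valid_adj e A Y (Z :|: U),
      dsep e I [set Y] (A |: (Z :|: U)) &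
      dsep e I U Z].
Proof.
move=> hacy hAY eAY hdesc hI hZ hU [hsub [[hS hvalid] hmin]].
set g := remove_edge e A Y in hvalid *.
have F1 : forall v, e A v -> v = Y.
  move=> v hv; case: (eqVneq v A) => [E|hvA].
    by subst v; move: (hacy A A hv); rewrite connect0.
  case: (eqVneq v Y) => // hvY; exfalso; apply: (hdesc v hvA hvY); exact: connect1.
have F2 : forall v, ~~ e Y v.
  move=> v; apply/negP => hv; case: (eqVneq v A) => [E|hvA].
    by subst v; move: (hacy A Y eAY); rewrite connect1.
  case: (eqVneq v Y) => [E|hvY].
    by subst v; move: (hacy Y Y hv); rewrite connect0.
  apply: (hdesc v hvA hvY); exact: connect_trans (connect1 eAY) (connect1 hv).
have FY : forall v, connect e Y v -> v = Y.
  move=> v /connectP [[|y p] /=]; [by move=> _ -> | by rewrite (negbTE (F2 y))].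
have FA : forall v, connect e A v -> (v == A) || (v == Y).
  move=> v /connectP [[|y p] /=]; first by move=> _ ->; rewrite eqxx.
  move=> /andP [/F1 -> ]; case: p => [|z p] /=; first by move=> _ ->; rewrite eqxx orbT.
  by rewrite (negbTE (F2 z)).
have gE : forall x y, g x y = e x y && ~~ ((x == A) && (y == Y)) by [].
have G1 : forall v, ~~ g A v.
  move=> v; rewrite gE eqxx /=; case: (boolP (e A v)) => // /F1 ->.
  by rewrite eqxx.
have GA : forall v, connect g A v -> v = A.
  move=> v /connectP [[|y p] /=]; [by move=> _ -> | by rewrite (negbTE (G1 y))].
have GY : forall v, connect g Y v -> v = Y.
  move=> v /connectP [[|y p] /=]; [by move=> _ -> | by rewrite gE (negbTE (F2 y))].
have G4 : forall x z, connect e x z -> z != Y -> connect g x z.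
  move=> x z /connectP [p hp ->]; elim: p x hp => [|y p IH] x /=.
    by rewrite connect0.
  move=> /andP [hxy hp] hl; apply: connect_trans (connect1 _) (IH y hp hl).
  rewrite gE hxy /=; apply/negP => /andP [/eqP hx /eqP hy].
  move: hp hl; rewrite hy.
  by case: p {IH} => [|w p] /=; [rewrite eqxx | rewrite (negbTE (F2 w))].
have Gns : forall u v, g u v -> ~~ g v u.
  move=> u v; rewrite !gE => /andP [huv _]; apply/negP => /andP [hvu _].
  by move: (hacy u v huv); rewrite connect1.
have adjEG : forall x y, x != A -> y != A -> adj e x y -> adj g x y.
  by move=> x y hx hy; rewrite /adj !gE (negbTE hx) (negbTE hy) /= !andbT.
have pathEG : forall x p, path (adj e) x p -> A \notin x :: p -> path (adj g) x p.
  move=> x p; elim: p x => [|y p IH] x //= /andP [hxy hp].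
  rewrite !inE !negb_or => /and3P [hx hy hA].
  apply/andP; split; first by apply: adjEG => //; rewrite eq_sym.
  by apply: IH hp _; rewrite inE negb_or hy hA.
have hZ' : forall z, z \in Z -> (z != A) && (z != Y).
  by move=> z /(subsetP hZ); rewrite !inE negb_or.
have hU' : forall u, u \in U -> (u != A) && (u != Y).
  by move=> u /hU [hn _]; rewrite !inE negb_or in hn.
have hI' : forall u, u \in I -> (u != A) && (u != Y).
  by move=> u /hI [hn _]; rewrite !inE negb_or in hn.
have hii : dsep g [set A] [set Y] (Z :|: U).
  move=> x y /set1P -> /set1P -> [p [hu hp hl hact]].
  set S := Z :|: I :|: U.
  case E: (act (okv g S) (A :: p)).
    apply: (hvalid A Y (set11 A) (set11 Y)); exists p; split => //.
    move/(act_nth _ A): E => H j h1 h2 /=; exact: (H j h1 h2).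
  have [j [hj0 hjs hbad]] := act_bad A (negbT E).
  move: (hact j hj0 hjs) hbad; rewrite /= /okv.
  set b := nth A (A :: p) j.
  case: ifP => hc.
    move=> hanc; rewrite (anc_sub _ hanc) //.
    by apply/subsetP => v; rewrite !inE => /orP [] ->; rewrite ?orbT.
  move=> hbZU; rewrite negbK => hbS.
  have hbI : b \in I.
    move: hbS hbZU; rewrite !inE.
    by case: (b \in Z); case: (b \in I); case: (b \in U).
  case/andP: (hI' b hbI) => hbA hbY.
  apply: (KL (hI b hbI)).
  have hjs' : j < size (A :: p) := ltnW hjs.
  have := L_conn (@path_drop _ _ A (A :: p) j hp hjs') hbA.
  rewrite (last_drop A hjs') /= hl; apply.
  apply/negP => /mem_drop hA; by case/andP: hu => /negP.
have ha : dsep e I [set Y] (A |: (Z :|: U)).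
  move=> x y hx /set1P -> [p [hu hp hl hact]].
  case/andP: (hI' x hx) => hxA hxY.
  set S0 := A |: (Z :|: U).
  case hAs: (A \in x :: p); last first.
    have hAp : A \notin p by apply/negP => h; rewrite inE h orbT in hAs.
    apply: (KL (hI x hx)); have := L_conn (pathEG x p hp (negbT hAs)) hxA hAp.
    by rewrite hl.
  have hAx : A != x by rewrite eq_sym.
  have hAl : A != last x p by rewrite hl.
  have [k [hk0 hks hkA]] := mem_interior hu hAs hAx hAl.
  move: (hact k hk0 hks); rewrite /= hkA.
  set c := nth x p k.
  case: (eqVneq c Y) => hcY.
    by rewrite hcY (negbTE (F2 A)) andbF /S0 !inE eqxx.
  move=> _.
  set q := drop k.+1 (x :: p).
  have hks' : k < size (x :: p) := ltnW hks.
  have hdk : drop k (x :: p) = A :: q by rewrite (drop_nth x hks') hkA.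
  have huq : uniq (A :: q) by rewrite -hdk drop_uniq.
  have hpq : path (adj e) A q.
    by have := @path_drop _ _ x (x :: p) k hp hks'; rewrite hkA.
  have hlq : last A q = Y.
    by have := last_drop x hks'; rewrite hkA => ->; exact: hl.
  have hqc : q = c :: drop k.+2 (x :: p) by rewrite /q (drop_nth x hks).
  have hpg : path (adj g) A q.
    move: hpq huq; rewrite hqc /= => /andP [hAc hp'] /andP [hAn hu'].
    rewrite inE negb_or in hAn; case/andP: hAn => hAc' hAn.
    apply/andP; split.
      move: hAc; rewrite /adj !gE eqxx (negbTE hcY) /= (eq_sym c A) (negbTE hAc') /=.
      by rewrite !andbT.
    by apply: pathEG hp' _; rewrite inE negb_or hAc' hAn.
  apply: (hii A Y (set11 A) (set11 Y)).
  apply: (@surg _ g (Z :|: U) A Y x q Gns GA _ GY _ huq hpg hlq).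
  - apply/negP; rewrite inE => /orP [/hZ'|/hU']; by rewrite eqxx.
  - by rewrite eq_sym.
  move=> j hj0 hjs.
  rewrite -hdk size_drop in hjs; rewrite -hdk !nth_drop.
  have hj0' : 0 < k + j by rewrite addn_gt0 hj0 orbT.
  have hjs' : (k + j).+1 < size (x :: p) by rewrite -addnS -ltn_subRL.
  have hkj : k + j < size (x :: p) := ltnW hjs'.
  have hbY : nth x (x :: p) (k + j) != Y.
    rewrite -hl; apply/eqP => E.
    have : nth x (x :: p) (k + j) = nth x (x :: p) (size p).
      by rewrite E; symmetry; exact: (nth_last x (x :: p)).
    move/eqP; rewrite nth_uniq //= => /eqP hh.
    by rewrite hh /= ltnn in hjs'.
  move: (hact (k + j) hj0' hjs') => /=.
  have -> : (k + j).-1 = k + j.-1 by case: j hj0 {hjs hj0' hjs' hkj hbY} => // j _; rewrite addnS.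
  rewrite addnS !gE (negbTE hbY) !andbF !andbT.
  case: ifP => _.
    move/existsP => [z /andP [hz hc]].
    move: hz; rewrite /S0 !inE => /orP [/eqP hzA|hzZU].
      by rewrite hzA in hc; rewrite (G4 _ _ hc) ?orbT.
    apply/orP; left; apply/existsP; exists z; rewrite inE hzZU /=.
    apply: G4 hc _.
    by case/orP: hzZU => [/hZ'|/hU'] /andP [].
  by rewrite /S0 !inE negb_or => /andP [_].
have hb : dsep e I U Z.
  move=> x u hx hu' [p [hup hp hl hact]].
  case/andP: (hI' x hx) => hxA hxY; case/andP: (hU' u hu') => huA huY.
  have hYs : Y \notin x :: p.
    apply/negP => hY.
    have hYx : Y != x by rewrite eq_sym.
    have hYl : Y != last x p by rewrite hl eq_sym.
    have [j [hj0 hjs hjY]] := mem_interior hup hY hYx hYl.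
    move: (hact j hj0 hjs) (nbrs hp hj0 hjs); rewrite /= hjY /adj.
    rewrite !(negbTE (F2 _)) orbF /= => /[swap] /andP [-> ->] /=.
    move/existsP => [z /andP [hz /FY hzY]].
    by move: (hZ' z hz); rewrite hzY eqxx andbF.
  have hAs : A \notin x :: p.
    apply/negP => hA.
    have hAx : A != x by rewrite eq_sym.
    have hAl : A != last x p by rewrite hl eq_sym.
    have [j [hj0 hjs hjA]] := mem_interior hup hA hAx hAl.
    have ha1 : nth x (x :: p) j.-1 != Y.
      apply/negP => /eqP E; move/negP: hYs; apply; rewrite -E; apply: mem_nth.
      exact: leq_ltn_trans (leq_pred j) (ltnW hjs).
    have hc1 : nth x (x :: p) j.+1 != Y.
      by apply/negP => /eqP E; move/negP: hYs; apply; rewrite -E mem_nth.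
    move: (hact j hj0 hjs) (nbrs hp hj0 hjs); rewrite /= hjA /adj.
    have hh : forall w, w != Y -> e A w = false.
      by move=> w hw; apply/negP => /F1 E; rewrite E eqxx in hw.
    rewrite (hh _ ha1) (hh _ hc1) /= orbF => /[swap] /andP [-> ->] /=.
    move/existsP => [z /andP [hz /FA hzA]].
    by move: (hZ' z hz); case/orP: hzA => /eqP ->; rewrite eqxx ?andbF.
  have c1 : connect (rA g A) x u.
    rewrite -hl; apply: L_conn => //; first exact: pathEG.
    by move: hAs; rewrite inE negb_or => /andP [].
  case: (hU u hu') => _ [_ [L [hL [q [huq hq hlq hqact]]]]].
  have hLA : A \notin L.
    by apply/negP => /(subsetP hL); rewrite !inE eqxx.
  have hAq : A \notin u :: q.
    apply/negP => hA.
    have hAu : A != u by rewrite eq_sym.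
    have hAl : A != last u q by rewrite hlq.
    have [j [hj0 hjs hjA]] := mem_interior huq hA hAu hAl.
    move: (hqact j hj0 hjs) (nbrs hq hj0 hjs); rewrite /= hjA /adj.
    rewrite -/g !(negbTE (G1 _)) /= orbF => /[swap] /andP [-> ->] /=.
    move/existsP => [z /andP [hz /GA hzA]].
    by rewrite -hzA hz in hLA.
  have c2 : connect (rA g A) u Y.
    have hAq' : A \notin q by move: hAq; rewrite inE negb_or => /andP [].
    by have := L_conn hq huA hAq'; rewrite hlq.
  exact: (KL (hI x hx) (connect_trans c1 c2)).
split => //.
split; first by split.
split => //; apply: subset_trans hS.
by apply/subsetP => v; rewrite !inE => /orP [] ->; rewrite ?orbT.
Qed.
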